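(* Let $S$ be an infinite finitely generated cancellative semigroup that is not a group. Then $|\Omega S|=1$ or $|\Omega S|\ge\aleph_0$.
   Context: $S$ is cancellative if both $ax=ay\Rightarrow x=y$ and $xa=ya\Rightarrow x=y$ for all $a,x,y\in S$. A digraph on $\Omega$ is a subset $\Gamma\subseteq\Omega\times\Omega$. A path is a sequence of pairwise distinct vertices $(v_0,v_1,\ldots)$ with $(v_i,v_{i+1})\in\Gamma$ (length 0 allowed); a ray is an infinite path; an anti-ray is an infinite sequence of distinct vertices with $(v_{i+1},v_i)\in\Gamma$. For infinite $\Sigma',\Sigma\subseteq\Omega$, $\Sigma'\preccurlyeq\Sigma$ means there are infinitely many pairwise vertex-disjoint paths from vertices of $\Sigma'$ to vertices of $\Sigma$. On rays and anti-rays $\preccurlyeq$ is a preorder with associated equivalence $\approx$; the ends are the $\approx$-classes of rays and anti-rays, and $\Omega\Gamma$ is the poset of ends. The right Cayley graph $\Gamma_r(S,A)$ has vertex set $S$ and edges $(x,xa)$, $x\in S$, $a\in A$. For finitely generated $S$, $\Omega S:=\Omega\Gamma_r(S,A)$ for any finite generating set $A$ (well defined up to isomorphism). *)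

(* Defs.v *)
From Stdlib Require Import List.
Import ListNotations.
Set Implicit Arguments.

Section Defs.
Variable V : Type.

Definition digraph := V -> V -> Prop.

Fixpoint edges_along (G : digraph) (l : list V) : Prop :=
  match l with
  | x :: ((y :: _) as t) => G x y /\ edges_along G t
  | _ => True
  end.

Definition fin_path (G : digraph) (p : list V) : Prop :=
  p <> [] /\ NoDup p /\ edges_along G p.

Definition path_from_to (G : digraph) (S' S : V -> Prop) (p : list V) : Prop :=
  fin_path G p /\ (exists x t, p = x :: t /\ S' x) /\
  (exists y h, p = h ++ [y] /\ S y).

Definition preceq (G : digraph) (S' S : V -> Prop) : Prop :=
  exists P : nat -> list V,
    (forall i, path_from_to G S' S (P i)) /\
    (forall i j, i <> j -> forall x, In x (P i) -> ~ In x (P j)).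

Definition injective_seq (v : nat -> V) : Prop :=
  forall i j, v i = v j -> i = j.

Definition is_ray (G : digraph) (v : nat -> V) : Prop :=
  injective_seq v /\ forall i, G (v i) (v (S i)).

Definition is_antiray (G : digraph) (v : nat -> V) : Prop :=
  injective_seq v /\ forall i, G (v (S i)) (v i).

Definition ray_or_antiray (G : digraph) (v : nat -> V) : Prop :=
  is_ray G v \/ is_antiray G v.

Definition vset (v : nat -> V) : V -> Prop := fun x => exists i, v i = x.

Definition end_equiv (G : digraph) (v w : nat -> V) : Prop :=
  preceq G (vset v) (vset w) /\ preceq G (vset w) (vset v).

(* |ΩΓ| = 1 : there is an end, and all rays/anti-rays lie in the same end. *)
Definition one_end (G : digraph) : Prop :=
  exists v, ray_or_antiray G v /\
    forall w, ray_or_antiray G w -> end_equiv G v w.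

(* |ΩΓ| ≥ ℵ0 : there are infinitely many (countably many pairwise distinct) ends,
   i.e. an injection ℕ → ΩΓ, given by pairwise inequivalent representatives. *)
Definition infinitely_many_ends (G : digraph) : Prop :=
  exists f : nat -> nat -> V,
    (forall n, ray_or_antiray G (f n)) /\
    (forall n m, n <> m -> ~ end_equiv G (f n) (f m)).

End Defs.

Section Semigroups.
Variable S : Type.
Variable mul : S -> S -> S.

Definition associative := forall x y z, mul x (mul y z) = mul (mul x y) z.

Definition cancellative :=
  (forall a x y, mul a x = mul a y -> x = y) /\
  (forall a x y, mul x a = mul y a -> x = y).

Definition is_group :=
  exists e, (forall x, mul e x = x /\ mul x e = x) /\
            (forall x, exists y, mul x y = e /\ mul y x = e).

Definition infinite_type := ~ exists l : list S, forall x, In x l.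

Inductive generated (A : list S) : S -> Prop :=
  | gen_base : forall a, In a A -> generated A a
  | gen_mul : forall x a, generated A x -> In a A -> generated A (mul x a).

Definition generates (A : list S) := forall x, generated A x.

Definition right_cayley (A : list S) : digraph S :=
  fun x y => exists a, In a A /\ y = mul x a.

End Semigroups.

(* Main.v *)
Require Import Defs.
From Stdlib Require Import List Arith Lia Classical ClassicalEpsilon.
Import ListNotations.

Fixpoint lastv {V : Type} (x : V) (l : list V) : V :=
  match l with [] => x | y :: l' => lastv y l' end.

Lemma lastv_split {V : Type} (l : list V) : forall x, exists h, x :: l = h ++ [lastv x l].
Proof.
  induction l as [|y l IH]; intro x.
  - exists []. reflexivity.
  - destruct (IH y) as [h Hh]. exists (x :: h). simpl. rewrite Hh. reflexivity.
Qed.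

Lemma lastv_app {V : Type} (l : list V) : forall y z, lastv y (l ++ [z]) = z.
Proof. induction l as [|b l IH]; intros; simpl; auto. Qed.

Lemma lastv_app2 {V : Type} (l1 : list V) : forall y x l2, lastv y (l1 ++ x :: l2) = lastv x l2.
Proof. induction l1 as [|b l IH]; intros; simpl; auto. Qed.

Lemma edges_app {V : Type} (G : digraph V) (l : list V) : forall y z,
  edges_along G (y :: l) -> G (lastv y l) z -> edges_along G (y :: l ++ [z]).
Proof.
  induction l as [|b l IH]; intros y z H1 H2; simpl in *.
  - tauto.
  - destruct H1 as [H1 H3]. split; auto. apply (IH b z H3 H2).
Qed.

Lemma edges_tail {V : Type} (G : digraph V) a l : edges_along G (a :: l) -> edges_along G l.
Proof. destruct l; simpl; tauto. Qed.

Lemma edges_suffix {V : Type} (G : digraph V) (l1 : list V) : forall l2,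
  edges_along G (l1 ++ l2) -> edges_along G l2.
Proof.
  induction l1 as [|a l IH]; intros l2 H; simpl in *; auto.
  apply IH. eapply edges_tail; eauto.
Qed.

Lemma walk_to_path {V : Type} (G : digraph V) (n : nat) : forall l x, length l <= n ->
  edges_along G (x :: l) ->
  exists p, fin_path G p /\ (exists t, p = x :: t) /\ (exists h, p = h ++ [lastv x l]) /\
    (forall q, In q p -> In q (x :: l)).
Proof.
  induction n as [|n IH]; intros l x Hl He.
  - destruct l; [|simpl in Hl; lia].
    exists [x]. split; [split; [discriminate|split; [constructor; [simpl; tauto|constructor]|exact I]]|].
    split; [exists []; reflexivity|]. split; [exists []; reflexivity|]. auto.
  - destruct (classic (In x l)) as [Hin|Hnin].
    + destruct (in_split _ _ Hin) as [l1 [l2 E]]. subst l.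
      assert (Hl2 : length l2 <= n) by (rewrite length_app in Hl; simpl in Hl; lia).
      assert (He2 : edges_along G (x :: l2)).
      { apply (edges_suffix G (x :: l1)). exact He. }
      destruct (IH l2 x Hl2 He2) as [p [Hp [Ht [Hh Hi]]]].
      exists p. rewrite lastv_app2. split; [exact Hp|split; [exact Ht|split; [exact Hh|]]].
      intros q Hq. apply Hi in Hq. destruct Hq as [Hq|Hq]; [left; auto|right].
      apply in_or_app. right. right. auto.
    + destruct l as [|b l'].
      * exists [x]. split; [split; [discriminate|split; [constructor; [simpl; tauto|constructor]|exact I]]|].
        split; [exists []; reflexivity|]. split; [exists []; reflexivity|]. auto.
      * simpl in Hl. simpl in He. destruct He as [Hxb He'].
        destruct (IH l' b ltac:(lia) He') as [p [[Hne [Hnd Hed]] [[t Ht] [[h Hh] Hi]]]].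
        exists (x :: p). split; [split; [discriminate|split]|].
        -- constructor; [intro Hx; apply Hnin; apply Hi in Hx; exact Hx | exact Hnd].
        -- rewrite Ht. simpl. rewrite Ht in Hed. split; auto.
        -- split; [exists p; reflexivity|]. split.
           ++ exists (x :: h). simpl. rewrite Hh. reflexivity.
           ++ intros q [Hq|Hq]; [left; auto|right; apply Hi; auto].
Qed.

Fixpoint acc {V : Type} (g : list V -> list V) (n : nat) : list V :=
  match n with 0 => [] | S n => g (acc g n) ++ acc g n end.

Lemma acc_incl {V : Type} (g : list V -> list V) : forall j i, i < j ->
  forall x, In x (g (acc g i)) -> In x (acc g j).
Proof.
  induction j as [|j IH]; intros i Hij x Hx; [lia|].
  simpl. apply in_or_app. destruct (Nat.eq_dec i j) as [->|Hne].
  - left; auto.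
  - right. apply (IH i); auto. lia.
Qed.

Lemma preceq_from_step {V : Type} (G : digraph V) (S1 S2 : V -> Prop) :
  (forall F, exists p, path_from_to G S1 S2 p /\ forall q, In q p -> ~ In q F) ->
  preceq G S1 S2.
Proof.
  intro H.
  pose (g := fun F => proj1_sig (constructive_indefinite_description _ (H F))).
  assert (Hg : forall F, path_from_to G S1 S2 (g F) /\ forall q, In q (g F) -> ~ In q F).
  { intro F. unfold g. destruct (constructive_indefinite_description _ (H F)). simpl. auto. }
  exists (fun n => g (acc g n)). split.
  - intro i. apply Hg.
  - intros i j Hij x Hi Hj.
    destruct (Nat.lt_total i j) as [Hlt|[Heq|Hgt]]; [|lia|].
    + apply (proj2 (Hg (acc g j)) x Hj). apply (acc_incl g j i Hlt x Hi).
    + apply (proj2 (Hg (acc g i)) x Hi). apply (acc_incl g i j Hgt x Hj).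
Qed.

Lemma ident (T : Type) (mul : T -> T -> T) (Ha : associative mul) (Hc : cancellative mul) :
  forall f u, mul f u = f -> forall y, mul u y = y /\ mul y u = y.
Proof.
  intros f u E y. destruct Hc as [Hl Hr].
  assert (E1 : mul u y = y). { apply (Hl f). rewrite Ha, E. reflexivity. }
  split; auto. apply (Hr y). rewrite <- Ha, E1. reflexivity.
Qed.

Lemma good_gen (T : Type) (mul : T -> T -> T) (Ha : associative mul) (Hc : cancellative mul)
  (Hng : ~ is_group mul) (A : list T) (HA : generates mul A) (s0 : T) :
  exists a, In a A /\ forall f r, mul f (mul a r) <> f.
Proof.
  apply NNPP; intro Hn.
  assert (H : forall a, In a A -> exists r, forall y, mul (mul a r) y = y /\ mul y (mul a r) = y).
  { intros a Hia. apply NNPP; intro H1. apply Hn. exists a. split; auto.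
    intros f r E. apply H1. exists r. apply (ident T mul Ha Hc f). exact E. }
  assert (Ha0 : exists a, In a A).
  { induction (HA s0); eauto. }
  destruct Ha0 as [a0 Ha0]. destruct (H a0 Ha0) as [r0 Hr0].
  set (e := mul a0 r0) in *.
  assert (Huniq : forall e', (forall y, mul e' y = y /\ mul y e' = y) -> e' = e).
  { intros e' He'. rewrite <- (proj1 (Hr0 e')) at 1. apply (proj2 (He' e)). }
  assert (Hinv : forall x, generated mul A x -> exists y, mul x y = e).
  { intros x Hx. induction Hx as [a Hia|x a Hx IH Hia].
    - destruct (H a Hia) as [r Hr]. exists r. apply Huniq. exact Hr.
    - destruct IH as [y Hy]. destruct (H a Hia) as [r Hr].
      assert (E : mul a r = e) by (apply Huniq; exact Hr).
      exists (mul r y). rewrite <- Ha, (Ha a r y), E, (proj1 (Hr0 y)). exact Hy. }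
  apply Hng. exists e. split; [exact Hr0|].
  intro x. destruct (Hinv x (HA x)) as [y Hy]. exists y. split; auto.
  apply (proj1 Hc x). rewrite Ha, Hy, (proj1 (Hr0 x)), (proj2 (Hr0 x)). reflexivity.
Qed.

Fixpoint lam {T : Type} (mul : T -> T -> T) (x : T) (n : nat) (t : T) : T :=
  match n with 0 => t | S n => mul x (lam mul x n t) end.

Lemma lam_mul (T : Type) (mul : T -> T -> T) (Ha : associative mul) x :
  forall n t a, mul (lam mul x n t) a = lam mul x n (mul t a).
Proof. induction n; intros; simpl; auto. rewrite <- Ha, IHn. reflexivity. Qed.

Lemma lam_inj (T : Type) (mul : T -> T -> T) (Hc : cancellative mul) x :
  forall n t t', lam mul x n t = lam mul x n t' -> t = t'.
Proof. induction n; intros t t' E; simpl in *; auto. apply IHn. apply (proj1 Hc x). exact E. Qed.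

Lemma lam_add (T : Type) (mul : T -> T -> T) x :
  forall n m t, lam mul x (n + m) t = lam mul x n (lam mul x m t).
Proof. induction n; intros; simpl; auto. rewrite IHn. reflexivity. Qed.

Lemma walk_gen (T : Type) (mul : T -> T -> T) (Ha : associative mul) (A : list T) :
  forall t, generated mul A t -> forall y, exists l,
    edges_along (right_cayley mul A) (y :: l) /\ lastv y l = mul y t /\
    forall q, In q l -> exists s, q = mul y s.
Proof.
  intros t Ht. induction Ht as [a Hia|x a Hx IH Hia]; intro y.
  - exists [mul y a]. simpl. split; [split; [exists a; auto|exact I]|]. split; auto.
    intros q [Hq|[]]. exists a. auto.
  - destruct (IH y) as [l [He [Hl Hi]]].
    exists (l ++ [mul (mul y x) a]). split; [|split].
    + apply edges_app; auto. rewrite Hl. exists a. auto.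
    + rewrite lastv_app. first [apply (Ha _ _ _) | symmetry; apply (Ha _ _ _)].
    + intros q Hq. apply in_app_or in Hq. destruct Hq as [Hq|[Hq|[]]]; auto.
      exists (mul x a). rewrite <- Hq. symmetry. first [apply (Ha _ _ _) | symmetry; apply (Ha _ _ _)].
Qed.

Lemma stays (T : Type) (mul : T -> T -> T) (Ha : associative mul) A x m :
  forall l y, edges_along (right_cayley mul A) (y :: l) -> (exists t, y = lam mul x m t) ->
  forall q, In q (y :: l) -> exists t, q = lam mul x m t.
Proof.
  induction l as [|b l IH]; intros y He Hy q Hq.
  - destruct Hq as [<-|[]]. exact Hy.
  - destruct Hq as [<-|Hq]; auto.
    simpl in He. destruct He as [[a [_ Eb]] He]. apply (IH b); auto.
    destruct Hy as [t Et]. exists (mul t a). rewrite Eb, Et. apply lam_mul; auto.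
Qed.

Lemma ray_div (T : Type) (mul : T -> T -> T) (Ha : associative mul) A v :
  is_ray (right_cayley mul A) v -> forall i k, exists c, v (i + S k) = mul (v i) c.
Proof.
  intros [_ Hv] i k. induction k as [|k IH].
  - destruct (Hv i) as [a [_ E]]. exists a. rewrite Nat.add_1_r. exact E.
  - destruct IH as [c Ec]. destruct (Hv (i + S k)) as [a [_ E]].
    exists (mul c a). replace (i + S (S k)) with (S (i + S k)) by lia.
    rewrite E, Ec. symmetry. first [apply (Ha _ _ _) | symmetry; apply (Ha _ _ _)].
Qed.

Lemma antiray_div (T : Type) (mul : T -> T -> T) (Ha : associative mul) A w :
  is_antiray (right_cayley mul A) w -> forall k, exists c, w 0 = mul (w (S k)) c.
Proof.
  intros [_ Hw] k. induction k as [|k IH].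
  - destruct (Hw 0) as [a [_ E]]. exists a. exact E.
  - destruct IH as [c Ec]. destruct (Hw (S k)) as [a [_ E]].
    exists (mul a c). rewrite Ec, E. symmetry. first [apply (Ha _ _ _) | symmetry; apply (Ha _ _ _)].
Qed.

Fixpoint apow {T : Type} (mul : T -> T -> T) (a : T) (n : nat) : T :=
  match n with 0 => a | S n => mul (apow mul a n) a end.

Lemma apow_add (T : Type) (mul : T -> T -> T) (Ha : associative mul) a :
  forall i k, apow mul a (i + S k) = mul (apow mul a i) (apow mul a k).
Proof.
  intros i k. induction k as [|k IH].
  - rewrite Nat.add_1_r. reflexivity.
  - replace (i + S (S k)) with (S (i + S k)) by lia. simpl. rewrite IH. symmetry. first [apply (Ha _ _ _) | symmetry; apply (Ha _ _ _)].
Qed.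

Lemma apow_left (T : Type) (mul : T -> T -> T) (Ha : associative mul) a :
  forall k, apow mul a (S k) = mul a (apow mul a k).
Proof.
  induction k as [|k IH]; [reflexivity|].
  change (apow mul a (S (S k))) with (mul (apow mul a (S k)) a).
  change (mul a (apow mul a (S k))) with (mul a (mul (apow mul a k) a)).
  rewrite (Ha a (apow mul a k) a), <- IH. reflexivity.
Qed.

Lemma apow_ray (T : Type) (mul : T -> T -> T) (Ha : associative mul) A a :
  In a A -> (forall f r, mul f (mul a r) <> f) -> is_ray (right_cayley mul A) (apow mul a).
Proof.
  intros Hia Hg. split.
  - assert (K : forall i k, apow mul a i <> apow mul a (i + S k)).
    { intros i k E. rewrite apow_add in E; auto. destruct k as [|k].
      - simpl in E. apply (Hg (apow mul a i) a). rewrite Ha, <- E, <- E. reflexivity.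
      - rewrite apow_left in E; auto. apply (Hg _ _ (eq_sym E)). }
    intros i j E. destruct (Nat.lt_total i j) as [Hlt|[Heq|Hgt]]; auto.
    + exfalso. apply (K i (j - S i)). rewrite E. f_equal. lia.
    + exfalso. apply (K j (i - S j)). rewrite <- E. f_equal. lia.
  - intro i. exists a. split; auto.
Qed.

Lemma case2_step (T : Type) (mul : T -> T -> T) (Ha : associative mul)
  (A : list T) (HA : generates mul A) (a : T)
  (Hg : forall f r, mul f (mul a r) <> f)
  (H2 : forall x v, ray_or_antiray (right_cayley mul A) v -> exists j t, v j = mul x t)
  (v w : nat -> T) (Hv : is_ray (right_cayley mul A) v) (Hw : is_ray (right_cayley mul A) w) :
  forall F, exists p, path_from_to (right_cayley mul A) (vset v) (vset w) p /\
    forall q, In q p -> ~ In q F.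
Proof.
  assert (avoid1 : forall f, exists i, forall c, f <> mul (v i) c).
  { intro f. apply NNPP; intro H.
    destruct (H2 (mul f a) v (or_introl Hv)) as [j [t Ej]].
    assert (Hc : exists c, f = mul (v j) c).
    { apply NNPP; intro H3. apply H. exists j. intros c E. apply H3. exists c. exact E. }
    destruct Hc as [c Ec]. apply (Hg f (mul t c)).
    rewrite Ec at 2. rewrite Ej. rewrite <- !Ha. reflexivity. }
  assert (mono : forall i j f, i <= j -> (forall c, f <> mul (v i) c) -> forall c, f <> mul (v j) c).
  { intros i j f Hij Hi c E. destruct (Nat.eq_dec i j) as [->|Hne]; [apply (Hi c E)|].
    destruct (ray_div T mul Ha A v Hv i (j - S i)) as [d Ed].
    replace (i + S (j - S i)) with j in Ed by lia.
    apply (Hi (mul d c)). rewrite E, Ed. rewrite <- Ha. reflexivity. }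
  assert (avoidF : forall F, exists i, forall f, In f F -> forall c, f <> mul (v i) c).
  { induction F as [|f F IH].
    - exists 0. intros _ [].
    - destruct IH as [i1 Hi1]. destruct (avoid1 f) as [i2 Hi2].
      exists (Nat.max i1 i2). intros f' [<-|Hf'].
      + apply (mono i2); auto. lia.
      + apply (mono i1); auto. lia. }
  intro F. destruct (avoidF F) as [i Hi].
  destruct (proj2 Hv i) as [a0 [_ E0]].
  set (y := v (S i)) in *.
  destruct (H2 y w (or_introl Hw)) as [j [t Ej]].
  destruct (walk_gen T mul Ha A t (HA t) y) as [l [He [Hl Hli]]].
  destruct (walk_to_path _ (length l) l y (le_n _) He) as [p [Hp [[t' Ht'] [[h Hh] Hpi]]]].
  exists p. split.
  - split; [exact Hp|split].
    + exists y, t'. split; auto. exists (S i). reflexivity.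
    + exists (lastv y l), h. split; auto. exists j. rewrite Hl. exact Ej.
  - intros q Hq HqF. apply Hpi in Hq. destruct Hq as [<-|Hq].
    + apply (Hi y HqF a0). exact E0.
    + destruct (Hli q Hq) as [s Es]. apply (Hi q HqF (mul a0 s)).
      rewrite Es, E0. rewrite <- Ha. reflexivity.
Qed.

Theorem mainTheorem13 (S : Type) (mul : S -> S -> S)
  (Hassoc : associative mul) (Hcanc : cancellative mul)
  (Hinf : infinite_type S) (Hng : ~ is_group mul)
  (A : list S) (HA : generates mul A) :
  one_end (right_cayley mul A) \/ infinitely_many_ends (right_cayley mul A).
Proof.
  assert (Hs0 : exists s0 : S, True).
  { apply NNPP; intro H. apply Hinf. exists []. intro x. apply H. exists x. exact I. }
  destruct Hs0 as [s0 _].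
  destruct (classic (exists x v, ray_or_antiray (right_cayley mul A) v /\
                       forall j t, v j <> mul x t)) as [H1|H2].
  -
    right. destruct H1 as [x [v [Hv Hnot]]].
    assert (Hf : forall n, ray_or_antiray (right_cayley mul A) (fun i => lam mul x n (v i))).
    { intro n. destruct Hv as [[Hi He]|[Hi He]]; [left|right]; split.
      - intros i j E. apply Hi. apply (lam_inj S mul Hcanc x n _ _ E).
      - intro i. destruct (He i) as [a [Ha E]]. exists a. split; auto.
        rewrite E. symmetry. apply (lam_mul S mul Hassoc).
      - intros i j E. apply Hi. apply (lam_inj S mul Hcanc x n _ _ E).
      - intro i. destruct (He i) as [a [Ha E]]. exists a. split; auto.
        rewrite E. symmetry. apply (lam_mul S mul Hassoc). }
    assert (noprec : forall n m, n < m ->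
      preceq (right_cayley mul A) (vset (fun i => lam mul x m (v i)))
                                  (vset (fun i => lam mul x n (v i))) -> False).
    { intros n m Hnm [P [HP _]].
      destruct (HP 0) as [[Hne [Hnd Hed]] [[x0 [t0 [Ep [i Ei]]]] [y [h [Ep2 [j Ej]]]]]].
      rewrite Ep in Hed.
      assert (Hy : In y (x0 :: t0)).
      { rewrite <- Ep, Ep2. apply in_or_app. right. left. reflexivity. }
      destruct (stays S mul Hassoc A x m t0 x0 Hed (ex_intro _ (v i) (eq_sym Ei)) y Hy) as [t Et].
      rewrite <- Ej in Et.
      replace m with (n + Datatypes.S (m - Datatypes.S n)) in Et by lia.
      rewrite lam_add in Et. apply lam_inj in Et; [|exact Hcanc].
      apply (Hnot j (lam mul x (m - Datatypes.S n) t)). exact Et. }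
    exists (fun n i => lam mul x n (v i)). split; [exact Hf|].
    intros n m Hnm [E1 E2]. destruct (Nat.lt_total n m) as [Hlt|[Heq|Hgt]].
    + exact (noprec n m Hlt E2).
    + exact (Hnm Heq).
    + exact (noprec m n Hgt E1).
  - left.
    assert (H2' : forall x v, ray_or_antiray (right_cayley mul A) v -> exists j t, v j = mul x t).
    { intros x v Hv. apply NNPP; intro H. apply H2. exists x, v. split; auto.
      intros j t E. apply H. exists j, t. exact E. }
    destruct (good_gen S mul Hassoc Hcanc Hng A HA s0) as [a [Hia Hg]].
    pose proof (apow_ray S mul Hassoc A a Hia Hg) as Hray.
    exists (apow mul a). split; [left; exact Hray|].
    intros w [Hw|Hw].
    + split; apply preceq_from_step; apply (case2_step S mul Hassoc A HA a Hg H2'); auto.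
    + exfalso. destruct (H2' (mul (w 0) a) w (or_intror Hw)) as [j [t Ej]].
      destruct j as [|k].
      * apply (Hg (w 0) t). rewrite Ej at 2. rewrite Hassoc. reflexivity.
      * destruct (antiray_div S mul Hassoc A w Hw k) as [c Ec].
        apply (Hg (w 0) (mul t c)). rewrite Ec at 2. rewrite Ej. rewrite <- !Hassoc. reflexivity.
Qed.
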